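(* Let $G$ be a finite connected undirected graph with $m$ edges, unknown to the agents. Two agents start at the same node of $G$ and both execute the navigation table $T_{\mathrm{explo}}$ (described in the context) in the asynchronous model. Then the two agents traverse all edges of $G$ twice and then stop at the same node after exactly $2m$ rounds.
   Context: Model. A passage (port) is an endpoint of an edge at one of its nodes; $u\xrightarrow{e}v$ denotes the passage of edge $e=(u,v)$ at $u$. Each passage carries one marker from a finite alphabet; initially every passage has the default marker $\emptyset$ (unmarked). The graph is unlabelled; an agent at a node sees only the markers of the passages at that node and remembers only the passage by which it arrived. A move of an agent at node $u$ consists of: (S1) reading the markers at $u$ and either stopping or choosing a passage $p_u$ at $u$; (S2) possibly changing the marker of $p_u$; (S3) traversing the corresponding edge; (S4) arriving at $v$ through passage $p_v$ and reading the markers at $v$; (S5) possibly changing the marker of $p_v$. In the asynchronous model, at each round an adversary chooses one of the two agents, which performs a whole move (S1)–(S5). Navigation tables. A navigation table is an ordered list of rows $(p_u, p_u', p_v, p_v')$. An agent at $u$ takes the first row (in order) such that $u$ has a passage with marker $p_u$ (rows with the same $p_u$ are distinguished only after arrival, by the condition in column $p_v$); it picks such a passage, replaces its marker by $p_u'$, traverses the edge, and on arriving at $v$ replaces the marker of the arrival passage by the $p_v'$ of the row whose $p_v$ condition holds. A dash means ''any marker / unchanged''. If no row applies, the agent stops. A node is ''discovered'' if it has been visited before. Table $T_{\mathrm{explo}}$ (rows in priority order, markers B, D, E, F): (1) $p_u=$B, $p_u'=$D, $p_v=$ -, $p_v'=$D; (2) $p_u=\emptyset$, $p_u'=$E, $p_v=$E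 (the arrival passage at $v$ is marked E), $p_v'=$D; (3) $p_u=\emptyset$, $p_u'=$E, $v$ already discovered, $p_v'=$B; (4) $p_u=\emptyset$, $p_u'=$E, $v$ undiscovered, $p_v'=$F; (5) $p_u=$F, $p_u'=$D, $p_v=$ -, $p_v'=$D; (6) $p_u=$E, $p_u'=$D, $p_v=$ -, $p_v'=$D. *)

(* Defs.v *)
From HB Require Import structures.
From mathcomp Require Import all_boot.
Set Implicit Arguments. Unset Strict Implicit. Unset Printing Implicit Defensive.

(* Markers: Emp is the default (unmarked) marker \emptyset. *)
Inductive marker := Emp | MB | MD | ME | MF.

Definition marker_eqb (x y : marker) : bool :=
  match x, y with
  | Emp, Emp | MB, MB | MD, MD | ME, ME | MF, MF => true
  | _, _ => false end.
Lemma marker_eqP : Equality.axiom marker_eqb.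
Proof. by do 2 case; constructor. Qed.
HB.instance Definition _ := hasDecEq.Build marker marker_eqP.

(* A finite simple undirected graph on V is given by a symmetric irreflexive
   relation adj.  The passage of the edge {u,v} at u is the ordered pair (u,v).
   Agents are indexed by bool. *)
Record config (V : finType) := Config {
  mk : V -> V -> marker;
  pos : bool -> V;
  visited : {set V}
}.

Record move (V : finType) := Move { agent : bool; src : V; dst : V }.

Definition init_config (V : finType) (s0 : V) : config V :=
  Config (fun _ _ => Emp) (fun _ => s0) [set s0].

Definition has_mark (V : finType) (adj : rel V) (c : config V) (u : V) (x : marker) :=
  [exists w, adj u w && (mk c u w == x)].

(* Column p_u of the first applicable row of T_explo at node u
   (rows 1; 2-4; 5; 6 in priority order), or None if the agent stops. *)
Definition select (V : finType) (adj : rel V) (c : config V) (u : V) : option marker :=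
  if has_mark adj c u MB then Some MB
  else if has_mark adj c u Emp then Some Emp
  else if has_mark adj c u MF then Some MF
  else if has_mark adj c u ME then Some ME
  else None.

(* A move (a, u, v) is possible: agent a is at u, (u,v) is a passage at u
   carrying the marker p_u of the first applicable row. The choice among
   several such passages is left open (adversarial). *)
Definition enabled (V : finType) (adj : rel V) (c : config V) (mv : move V) : Prop :=
  [/\ pos c (agent mv) = src mv, adj (src mv) (dst mv)
    & select adj c (src mv) = Some (mk c (src mv) (dst mv))].

(* new marker p_u' of the departure passage *)
Definition out_marker (x : marker) : marker :=
  if x == Emp then ME else MD.

(* new marker p_v' of the arrival passage (read before the update) *)
Definition in_marker (V : finType) (c : config V) (u v : V) : marker :=
  if mk c u v == Emp then
    (if mk c v u == ME then MD          (* row 2 *)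
     else if v \in visited c then MB    (* row 3 *)
     else MF)                           (* row 4 *)
  else MD.                              (* rows 1, 5, 6 *)

Definition next (V : finType) (c : config V) (mv : move V) : config V :=
  let u := src mv in let v := dst mv in
  let o := out_marker (mk c u v) in let i := in_marker c u v in
  Config (fun x y => if (x == u) && (y == v) then o
                     else if (x == v) && (y == u) then i else mk c x y)
         (fun b => if b == agent mv then v else pos c b)
         (v |: visited c).

(* s is a valid asynchronous execution from c: each round one agent performs
   a whole move. *)
Fixpoint valid_run (V : finType) (adj : rel V) (c : config V) (s : seq (move V)) : Prop :=
  if s is mv :: s' then enabled adj c mv /\ valid_run adj (next c mv) s' else True.

Definition final (V : finType) (c : config V) (s : seq (move V)) : config V :=
  foldl (@next V) c s.

Definition stuck (V : finType) (adj : rel V) (c : config V) : Prop :=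
  forall mv, ~ enabled adj c mv.

Definition edges (V : finType) (adj : rel V) : {set {set V}} :=
  [set [set x; y] | x in V, y in V & adj x y].

Definition traversals (V : finType) (e : {set V}) (s : seq (move V)) : nat :=
  count (fun mv => [set src mv; dst mv] == e) s.

(* Main.v *)
Require Import Defs.
From HB Require Import structures.
From mathcomp Require Import all_boot.
From mathcomp Require Import zify.
Set Implicit Arguments. Unset Strict Implicit. Unset Printing Implicit Defensive.

Section Proof.
Variable V : finType.
Variable adj : rel V.
Hypothesis adj_sym : symmetric adj.
Hypothesis adj_irr : irreflexive adj.
Hypothesis adj_conn : forall x y : V, connect adj x y.

Definition wt (m : marker) : nat := match m with Emp | ME => 1 | _ => 0 end.
Definition pe (c : config V) x y := wt (mk c x y) + wt (mk c y x).

Definition inprog (m : marker) : bool := (m == ME) || (m == MF) || (m == MB).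
Definition okpair (p q : marker) : bool :=
  match p, q with
  | Emp, Emp | ME, MF | MF, ME | ME, MB | MB, ME | MD, MD => true
  | _, _ => false end.
Definition ag (c : config V) (x : V) : nat := (pos c true == x) + (pos c false == x).
Definition sP (c : config V) (x : V) (p : pred marker) : {set V} :=
  [set y | adj x y && p (mk c x y)].
Definition isB (m : marker) : bool := m == MB.
Definition nB c x := #|sP c x isB|.
Definition deg c x := #|sP c x inprog|.

Record Inv (c : config V) : Prop := {
  i_ok : forall x y, adj x y -> okpair (mk c x y) (mk c y x);
  i_vis : forall x y, adj x y -> mk c x y != Emp -> x \in visited c;
  i_pos : forall b, pos c b \in visited c;
  i_nB : forall x, nB c x <= ag c x;
  i_K : forall x, x \in visited c -> (exists2 y, adj x y & mk c x y = Emp) ->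
         nB c x < ag c x \/ (exists2 y, adj x y & (mk c x y == ME) || (mk c x y == MF));
  i_par : forall x, (deg c x + ag c x) %% 2 = 0;
  i_U : forall x y z, adj x y -> adj x z -> mk c x y = MF -> mk c x z = MF -> y = z;
  i_R : exists r : V -> nat, forall x y, adj x y -> mk c x y = MF -> r y < r x
}.

Lemma card_toggle (A B : {set V}) z :
  (forall y, y != z -> (y \in A) = (y \in B)) -> #|A| + (z \in B) = #|B| + (z \in A).
Proof.
move=> H; rewrite (cardsD1 z A) (cardsD1 z B).
have -> : A :\ z = B :\ z.
  by apply/setP => y; rewrite !inE; case: eqP => // /eqP /H.
lia.
Qed.

Lemma Inv_init s0 : Inv (init_config s0).
Proof.
have nb : forall x p, ~~ p Emp -> sP (init_config s0) x p = set0.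
  by move=> x p np; apply/setP => y; rewrite !inE /= (negbTE np) andbF.
split => //=.
- by move=> b; rewrite inE.
- by move=> x; rewrite /nB nb // cards0.
- move=> x; rewrite inE => /eqP -> _; left; rewrite /nB nb // cards0 /ag /= eqxx.
  done.
- move=> x; rewrite /deg nb // cards0 /ag /=; by case: (s0 == x).
- by exists (fun _ => 0).
Qed.

Lemma select_some c u m : select adj c u = Some m -> exists2 w, adj u w & mk c u w = m.
Proof.
rewrite /select /has_mark.
by repeat case: ifP => [/existsP [w /andP [H1 /eqP H2]] [<-]|_]; try (by exists w) => //.
Qed.

Lemma no_mark c u x : ~~ has_mark adj c u x -> forall w, adj u w -> mk c u w != x.
Proof. by move=> /existsPn H w auw; move: (H w); rewrite auw. Qed.

Lemma select_spec c u m : select adj c u = Some m ->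
  [\/ m = MB,
      m = Emp /\ ~~ has_mark adj c u MB,
      [/\ m = MF, ~~ has_mark adj c u MB & ~~ has_mark adj c u Emp] |
      [/\ m = ME, ~~ has_mark adj c u MB, ~~ has_mark adj c u Emp & ~~ has_mark adj c u MF]].
Proof.
rewrite /select.
case: ifP => [_ [<-]|h1]; first by constructor 1.
case: ifP => [_ [<-]|h2]; first by constructor 2; split => //; apply: negbT.
case: ifP => [_ [<-]|h3]; first by constructor 3; split => //; apply: negbT.
case: ifP => [_ [<-]|h4] //; by constructor 4; split => //; apply: negbT.
Qed.

Lemma okpairC p q : okpair p q = okpair q p.
Proof. by case: p; case: q. Qed.

Lemma out_ne m : [/\ out_marker m != MF, out_marker m != Emp & out_marker m != MB].
Proof. by rewrite /out_marker; case: ifP. Qed.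

Lemma nB0 c u : (forall w, adj u w -> mk c u w != MB) -> nB c u = 0.
Proof.
move=> h; apply/eqP; rewrite cards_eq0; apply/eqP/setP => y; rewrite !inE.
by apply/negbTE; apply/negP => /andP [ay /eqP e]; move: (h y ay); rewrite e.
Qed.

Section Step.
Variables (c : config V) (a : bool) (u v : V).
Hypothesis HI : Inv c.
Hypothesis Hpos : pos c a = u.
Hypothesis Huv : adj u v.
Hypothesis Hsel : select adj c u = Some (mk c u v).
Local Notation cn := (Defs.next c (Move a u v)).

Lemma uv : u != v.
Proof. by apply: contraTneq Huv => ->; rewrite adj_irr. Qed.
Lemma vu : v != u.
Proof. by rewrite eq_sym uv. Qed.

Lemma mkE x y : mk cn x y = if (x == u) && (y == v) then out_marker (mk c u v)
  else if (x == v) && (y == u) then in_marker c u v else mk c x y.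
Proof. by []. Qed.
Lemma mk_uv : mk cn u v = out_marker (mk c u v).
Proof. by rewrite mkE !eqxx. Qed.
Lemma mk_vu : mk cn v u = in_marker c u v.
Proof. by rewrite mkE (negbTE vu) !eqxx. Qed.
Lemma mk_nouv x y : (x == u) && (y == v) = false -> (x == v) && (y == u) = false ->
  mk cn x y = mk c x y.
Proof. by rewrite mkE => -> ->. Qed.
Lemma mk_u y : y != v -> mk cn u y = mk c u y.
Proof. by move=> h; rewrite mk_nouv // ?eqxx ?(negbTE h) ?(negbTE uv). Qed.
Lemma mk_v y : y != u -> mk cn v y = mk c v y.
Proof. by move=> h; rewrite mk_nouv // ?eqxx ?(negbTE h) ?(negbTE vu). Qed.
Lemma mk_o x y : x != u -> x != v -> mk cn x y = mk c x y.
Proof. by move=> h1 h2; rewrite mk_nouv // ?(negbTE h1) ?(negbTE h2). Qed.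
Lemma mk_o' x y : x != u -> x != v -> mk cn y x = mk c y x.
Proof. by move=> h1 h2; rewrite mk_nouv // ?(negbTE h1) ?(negbTE h2) ?andbF. Qed.

Lemma agE x : ag cn x + (u == x) = ag c x + (v == x).
Proof.
rewrite /ag /=; move: Hpos; case: a => /= <-;
 case: (pos c true == x); case: (pos c false == x); case: (v == x) => //.
Qed.

Lemma cases_uv :
 [\/ [/\ mk c u v = Emp, mk c v u = Emp & forall w, adj u w -> mk c u w != MB],
     mk c u v = MB /\ mk c v u = ME,
     [/\ mk c u v = MF, mk c v u = ME & forall w, adj u w -> mk c u w != MB /\ mk c u w != Emp] |
     [/\ mk c u v = ME, (mk c v u = MF \/ mk c v u = MB) &
        forall w, adj u w -> [/\ mk c u w != MB, mk c u w != Emp & mk c u w != MF]]].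
Proof.
have ok := i_ok HI Huv.
case: (select_spec Hsel) => [e|[e h]|[e h1 h2]|[e h1 h2 h3]]; rewrite e in ok *; move: ok;
  case E: (mk c v u) => // _.
- by constructor 2.
- by constructor 1; split => //; apply: no_mark.
- by constructor 3; split => // w aw; split; [exact: (no_mark h1 aw) | exact: (no_mark h2 aw)].
- by constructor 4; split => //; [right | move=> w aw; split; [exact: (no_mark h1 aw) | exact: (no_mark h2 aw) | exact: (no_mark h3 aw)]].
- by constructor 4; split => //; [left | move=> w aw; split; [exact: (no_mark h1 aw) | exact: (no_mark h2 aw) | exact: (no_mark h3 aw)]].
Qed.

Lemma sP_o x p : x != u -> x != v -> sP cn x p = sP c x p.
Proof. by move=> h1 h2; apply/setP => y; rewrite !inE mk_o. Qed.
Lemma sP_u p : #|sP cn u p| + p (mk c u v) = #|sP c u p| + p (mk cn u v).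
Proof.
have := @card_toggle (sP cn u p) (sP c u p) v.
rewrite !inE Huv /= => -> // y yv; by rewrite !inE mk_u.
Qed.
Lemma sP_v p : #|sP cn v p| + p (mk c v u) = #|sP c v p| + p (mk cn v u).
Proof.
have := @card_toggle (sP cn v p) (sP c v p) u.
rewrite !inE adj_sym Huv /= => -> // y yv; by rewrite !inE mk_v.
Qed.

Lemma visE : visited cn = v |: visited c.
Proof. by []. Qed.
Lemma posE b : pos cn b = if b == a then v else pos c b.
Proof. by []. Qed.

Lemma u_vis : u \in visited c.
Proof. by rewrite -Hpos i_pos. Qed.

Lemma in_MF : in_marker c u v = MF -> v \notin visited c.
Proof. by rewrite /in_marker; case: ifP => _ //; case: ifP => _ //; case: ifP. Qed.

Lemma unvis_emp y : v \notin visited c -> adj v y -> mk c v y = Emp.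
Proof.
move=> nv ay; apply/eqP; move: nv; apply: contraNT => h; exact (i_vis HI ay h).
Qed.

Lemma ok' : forall x y, adj x y -> okpair (mk cn x y) (mk cn y x).
Proof.
move=> x y axy.
have okuv : okpair (mk cn u v) (mk cn v u).
  rewrite mk_uv mk_vu /in_marker.
  by case: cases_uv => [[-> -> _]|[-> ->]|[-> -> _]|[-> [->|->] _]] //=; case: ifP.
case: (eqVneq x u) => [exu|xu].
  subst x; case: (eqVneq y v) => [->|yv] //.
  have yu : y != u by apply: contraTneq axy => ->; rewrite adj_irr.
  by rewrite mk_u // mk_o //; exact: i_ok.
case: (eqVneq x v) => [exv|xv].
  subst x; case: (eqVneq y u) => [->|yu]; first by rewrite okpairC.
  have yv : y != v by apply: contraTneq axy => ->; rewrite adj_irr.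
  by rewrite mk_v // mk_o //; exact: i_ok.
by rewrite mk_o // mk_o' //; exact: i_ok.
Qed.

Lemma vis' : forall x y, adj x y -> mk cn x y != Emp -> x \in visited cn.
Proof.
move=> x y axy; rewrite visE !inE.
case: (eqVneq x v) => [->|xv]; first by rewrite ?eqxx.
case: (eqVneq x u) => [->|xu]; first by rewrite u_vis ?orbT.
by rewrite mk_o // => h; rewrite (i_vis HI axy h) orbT.
Qed.

Lemma pos'' : forall b, pos cn b \in visited cn.
Proof. by move=> b; rewrite visE posE !inE; case: ifP => _; rewrite ?eqxx ?i_pos ?orbT. Qed.

Lemma nB' : forall x, nB cn x <= ag cn x.
Proof.
move=> x.
case: (eqVneq x u) => [->|xu].
  have E1 := sP_u isB; have E2 := agE u; have E3 := i_nB HI u.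
  move: E1 E2 E3; rewrite /nB mk_uv eqxx (negbTE vu) /= /isB.
  have [o1 _ o3] := out_ne (mk c u v).
  rewrite (negbTE o3).
  case: cases_uv => [[e _ h]|[e _]|[e _ h]|[e _ h]]; rewrite e /=; try lia.
  - have : nB c u = 0 by apply: nB0 => w /h.
    rewrite /nB /isB; lia.
  - have : nB c u = 0 by apply: nB0 => w /h [].
    rewrite /nB /isB; lia.
  - have : nB c u = 0 by apply: nB0 => w /h [].
    rewrite /nB /isB; lia.
case: (eqVneq x v) => [->|xv].
  have E1 := sP_v isB; have E2 := agE v; have E3 := i_nB HI v.
  move: E1 E2 E3; rewrite /nB eqxx (negbTE uv) /= /isB.
  have := leq_b1 (mk cn v u == MB); have := leq_b1 (mk c v u == MB); lia.
have := agE x; have := i_nB HI x; rewrite /nB sP_o // eq_sym (negbTE xu) eq_sym (negbTE xv).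
lia.
Qed.

Lemma K' : forall x, x \in visited cn -> (exists2 y, adj x y & mk cn x y = Emp) ->
  nB cn x < ag cn x \/ (exists2 y, adj x y & (mk cn x y == ME) || (mk cn x y == MF)).
Proof.
move=> x; rewrite visE inE => xvis [y axy Ey].
case: (eqVneq x u) => [exu|xu].
  subst x.
  have yv : y != v.
    apply/eqP => eyv; subst y; have [_ o2 _] := out_ne (mk c u v).
    by rewrite -mk_uv Ey in o2.
  rewrite mk_u // in Ey.
  have E1 := sP_u isB; have E2 := agE u.
  move: E1 E2; rewrite /nB mk_uv eqxx (negbTE vu) /=.
  case: cases_uv => [[e _ h]|[e _]|[e _ h]|[e _ h]]; rewrite e.
  - by move=> _ _; right; exists v => //; rewrite !eqxx.
  - case: (i_K HI u_vis (ex_intro2 _ _ y axy Ey)) => [lt|[y' ay' EF]].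
      by rewrite /nB in lt; move=> E1 E2; simpl in E1; left; rewrite /nB; lia.
    move=> _ _; right; exists y' => //.
    have y'v : y' != v by apply: contraTneq EF => ->; rewrite e.
    by rewrite (negbTE y'v) (negbTE uv) andbF /=.
  - by case: (h y axy) => _; rewrite Ey.
  - by case: (h y axy) => _; rewrite Ey.
case: (eqVneq x v) => [exv|xv].
  subst x.
  have yu : y != u.
    apply/eqP => eyu; subst y; rewrite mk_vu /in_marker in Ey; move: Ey.
    by case: ifP => _ //; case: ifP => _ //; case: ifP.
  rewrite mk_v // in Ey.
  case: (boolP ((mk cn v u == ME) || (mk cn v u == MF))) => [h|h].
    by right; exists u => //; rewrite adj_sym.
  have vvis : v \in visited c.
    move: h; apply: contraNT => nv.
    have avu : adj v u by rewrite adj_sym.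
    have evu := unvis_emp nv avu.
    move: (i_ok HI Huv); rewrite mk_vu /in_marker evu (negbTE nv).
    by case: (mk c u v).
  have E1 := sP_v isB; have E2 := agE v; have E3 := i_nB HI v.
  rewrite eqxx (negbTE uv) in E2; rewrite /nB in E3.
  have L1 := leq_b1 (isB (mk cn v u)); have L2 := leq_b1 (isB (mk c v u)).
  case: (i_K HI vvis (ex_intro2 _ _ y axy Ey)) => [lt|[y' ay' EF]].
    by rewrite /nB in lt; left; rewrite /nB; lia.
  case: (eqVneq y' u) => [ey'|y'u]; last first.
    by right; exists y' => //; rewrite mk_v.
  subst y'.
  have M : mk cn v u = MD.
    rewrite mk_vu /in_marker; have := i_ok HI Huv.
    by case/orP: EF => /eqP ->; case: (mk c u v).
  have N : isB (mk c v u) = false by case/orP: EF => /eqP ->.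
  rewrite M N /= in E1.
  by left; rewrite /nB; lia.
rewrite inE (negbTE xv) /= in xvis.
rewrite mk_o // in Ey.
have E2 := agE x; rewrite eq_sym (negbTE xu) eq_sym (negbTE xv) !addn0 in E2.
case: (i_K HI xvis (ex_intro2 _ _ y axy Ey)) => [lt|[y' ay' EF]].
  by left; rewrite /nB sP_o // E2.
by right; exists y' => //; rewrite mk_o.
Qed.

Lemma par' x : (deg cn x + ag cn x) %% 2 = 0.
Proof.
case: (eqVneq x u) => [->|xu].
  have E1 := sP_u inprog; have E2 := agE u; have E3 := i_par HI u.
  move: E1 E2 E3; rewrite /deg mk_uv eqxx (negbTE vu) /=.
  by case: cases_uv => [[e _ _]|[e _]|[e _ _]|[e _ _]]; rewrite e /=; lia.
case: (eqVneq x v) => [->|xv].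
  have E1 := sP_v inprog; have E2 := agE v; have E3 := i_par HI v.
  move: E1 E2 E3; rewrite /deg eqxx (negbTE uv) mk_vu /in_marker /=.
  case: cases_uv => [[e e' _]|[e e']|[e e' _]|[e [e'|e'] _]]; rewrite e e' /=; try lia.
  by case: (v \in visited c) => /=; lia.
rewrite /deg sP_o //; have := agE x.
rewrite eq_sym (negbTE xu) eq_sym (negbTE xv) !addn0 => ->; exact (i_par HI x).
Qed.

Lemma U' x y z : adj x y -> adj x z -> mk cn x y = MF -> mk cn x z = MF -> y = z.
Proof.
move=> axy axz.
have nouv w : mk cn u w = MF -> w != v.
  move=> h; apply/eqP => ew; subst w; have [o1 _ _] := out_ne (mk c u v).
  by rewrite -mk_uv h in o1.
case: (eqVneq x u) => [exu|xu].
  subst x => hy hz.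
  have yv := nouv _ hy; have zv := nouv _ hz.
  rewrite mk_u // in hy; rewrite mk_u // in hz; exact (i_U HI axy axz hy hz).
case: (eqVneq x v) => [exv|xv].
  subst x => hy hz.
  case: (eqVneq y u) => [ey|yu]; case: (eqVneq z u) => [ez|zu].
  - by rewrite ey ez.
  - subst y; rewrite mk_vu in hy; have nv := in_MF hy.
    by rewrite mk_v // (unvis_emp nv axz) in hz.
  - subst z; rewrite mk_vu in hz; have nv := in_MF hz.
    by rewrite mk_v // (unvis_emp nv axy) in hy.
  - rewrite mk_v // in hy; rewrite mk_v // in hz; exact (i_U HI axy axz hy hz).
move=> hy hz; rewrite mk_o // in hy; rewrite mk_o // in hz; exact (i_U HI axy axz hy hz).
Qed.

Lemma R' : exists r : V -> nat, forall x y, adj x y -> mk cn x y = MF -> r y < r x.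
Proof.
case: (i_R HI) => r Hr.
have gen : forall x y, adj x y -> mk cn x y = MF -> (x == v) && (y == u) \/ mk c x y = MF.
  move=> x y axy; rewrite mkE; case: ifP => [_ h|_].
    by have [o1 _ _] := out_ne (mk c u v); rewrite h in o1.
  by case: ifP => [h2 _|_ h]; [left | right].
case: (boolP (v \in visited c)) => vv.
  exists r => x y axy h; case: (gen x y axy h) => [/andP [/eqP ex /eqP ey]|h'].
    by move: h; rewrite ex ey mk_vu => h; move: (in_MF h); rewrite vv.
  exact: Hr axy h'.
exists (fun x => if x == v then (r u).+1 else r x) => x y axy h.
case: (gen x y axy h) => [/andP [/eqP ex /eqP ey]|h'].
  by rewrite ex ey eqxx (negbTE uv).
have xv : x != v by apply/eqP => ex; subst x; rewrite (unvis_emp vv axy) in h'.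
have yv : y != v.
  apply/eqP => ey; subst y; have ayx : adj v x by rewrite adj_sym.
  by have := i_ok HI axy; rewrite h' (unvis_emp vv ayx).
rewrite (negbTE xv) (negbTE yv); exact: Hr axy h'.
Qed.

Lemma Inv_next : Inv cn.
Proof.
split.
- exact: ok'.
- exact: vis'.
- exact: pos''.
- exact: nB'.
- exact: K'.
- exact: par'.
- exact: U'.
- exact: R'.
Qed.


Lemma pe_uv : pe cn u v + 1 = pe c u v.
Proof.
rewrite /pe mk_uv mk_vu /in_marker.
case: cases_uv => [[e e' _]|[e e']|[e e' _]|[e [e'|e'] _]]; rewrite e e' //=.
by case: (v \in visited c).
Qed.

Lemma pe_step x y : adj x y -> ([set u; v] == [set x; y]) + pe cn x y = pe c x y.
Proof.
move=> axy; case: (boolP ([set u; v] == [set x; y])) => [/eqP E|NE].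
  have : (x == u) && (y == v) || (x == v) && (y == u).
    have xu : x \in [set u; v] by rewrite E !inE eqxx.
    have yu : y \in [set u; v] by rewrite E !inE eqxx orbT.
    have xy : x != y by apply: contraTneq axy => ->; rewrite adj_irr.
    move: xu yu xy; rewrite !inE.
    by case/orP => /eqP ->; case/orP => /eqP ->; rewrite ?eqxx ?orbT.
  move=> H; have := pe_uv.
  case/orP: H => /andP [/eqP -> /eqP ->]; last rewrite /pe [wt (mk cn u v) + _]addnC [wt (mk c u v) + _]addnC;
   rewrite /pe /=; lia.
have h1 : (x == u) && (y == v) = false.
  by apply/negbTE; apply: contraNN NE => /andP [/eqP -> /eqP ->].
have h2 : (x == v) && (y == u) = false.
  apply/negbTE; apply: contraNN NE => /andP [/eqP -> /eqP ->].
  by apply/eqP; apply: setUC.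
have h3 : (y == u) && (x == v) = false by rewrite andbC.
have h4 : (y == v) && (x == u) = false by rewrite andbC.
by rewrite /= /pe (mk_nouv h1 h2) (mk_nouv h3 h4).
Qed.

End Step.

Lemma Inv_run c s : Inv c -> valid_run adj c s -> Inv (final c s).
Proof.
elim: s c => [|[a u v] s IH] c //= Hc [[Hp Ha Hs] Hv].
rewrite /final /=; apply: IH Hv; exact: Inv_next.
Qed.


Lemma trav c s x y : Inv c -> valid_run adj c s -> adj x y ->
  traversals [set x; y] s + pe (final c s) x y = pe c x y.
Proof.
elim: s c => [|[a u v] s IH] c HI /=; first by [].
move=> [[Hp Ha Hs] Hv] axy.
have HI' := Inv_next HI Hp Ha Hs.
have := IH _ HI' Hv axy; rewrite /final /= => IH'.
by rewrite -addnA IH' pe_step.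
Qed.

Lemma size_sum c s : valid_run adj c s -> size s = \sum_(e in edges adj) traversals e s.
Proof.
elim: s c => [|[a u v] s IH] c /=.
  by move=> _; rewrite big1.
move=> [[Hp Ha Hs] Hv]; rewrite (IH _ Hv).
have -> : \sum_(e in edges adj) traversals e (Move a u v :: s) =
          \sum_(e in edges adj) (([set u; v] == e) + traversals e s).
  by apply: eq_bigr.
rewrite big_split /=.
have mem : [set u; v] \in edges adj.
  by apply/imset2P; exists u v; rewrite ?inE ?Ha.
have -> : \sum_(e in edges adj) ([set u; v] == e) = 1.
  rewrite (bigD1 _ mem) /= eqxx big1 ?addn0 // => e /andP [_ ne].
  by rewrite eq_sym (negbTE ne).
by rewrite add1n.
Qed.

Lemma stuck_sel c b : stuck adj c -> forall w, adj (pos c b) w -> mk c (pos c b) w = MD.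
Proof.
move=> St w aw; case E: (select adj c (pos c b)) => [m|].
  case: (select_some E) => w' aw' Ew'; exfalso.
  by apply: (St (Move b (pos c b) w')); split => //=; rewrite E Ew'.
have hm x : mk c (pos c b) w = x -> has_mark adj c (pos c b) x.
  by move=> h; apply/existsP; exists w; rewrite aw h eqxx.
case M: (mk c (pos c b) w) => //; move: E; rewrite /select (hm _ M);
  by repeat case: ifP.
Qed.

Lemma stuck_final c : Inv c -> stuck adj c ->
  pos c true = pos c false /\ forall x y, adj x y -> mk c x y = MD.
Proof.
move=> HI St.
have Dp b : forall w, adj (pos c b) w -> mk c (pos c b) w = MD := stuck_sel St.
have deg0 b : deg c (pos c b) = 0.
  apply/eqP; rewrite cards_eq0; apply/eqP/setP => w; rewrite !inE.
  by case aw: (adj _ w) => //=; rewrite Dp.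
have epos : pos c true = pos c false.
  have := i_par HI (pos c true); rewrite deg0 /ag eqxx.
  by case: (eqVneq (pos c false) (pos c true)).
have ag0 x : x != pos c true -> ag c x = 0.
  by move=> h; rewrite /ag -epos eq_sym (negbTE h).
have noB x y : adj x y -> mk c x y != MB.
  move=> axy; case: (eqVneq x (pos c true)) => [ex|xp].
    by move: axy; rewrite ex => axy; rewrite Dp.
  have := i_nB HI x; rewrite ag0 // leqn0 /nB cards_eq0 => /eqP E.
  apply/negP => /eqP h; have : y \in sP c x isB by rewrite inE axy h.
  by rewrite E inE.
have noH x y : adj x y -> ~~ inprog (mk c x y).
  move=> axy; apply/negP => hx.
  pose P := [pred z | [exists w, adj z w && inprog (mk c z w)]].
  have Px : P x by apply/existsP; exists y; rewrite axy hx.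
  case: (i_R HI) => r Hr.
  case: (arg_maxnP r Px) => z Pz zmax.
  have zp : z != pos c true.
    apply: contraTneq Pz => ->; apply/existsPn => w.
    by rewrite negb_and; case aw: (adj _ w) => //=; rewrite Dp.
  have onlyF w : adj z w -> inprog (mk c z w) -> mk c z w = MF.
    move=> aw hw; have ok := i_ok HI aw.
    have awz : adj w z by rewrite adj_sym.
    move: hw ok (noB _ _ aw) (noB _ _ awz); case E: (mk c z w) => //= _.
    case E': (mk c w z) => // _ _ _.
    have Pw : P w by apply/existsP; exists z; rewrite awz E'.
    by have := zmax w Pw; have := Hr _ _ awz E'; lia.
  case/existsP: Pz => w0 /andP [aw0 hw0].
  have S1 : sP c z inprog = [set w0].
    apply/setP => w; rewrite !inE; apply/idP/idP => [/andP [aw hw]|/eqP ->].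
      by apply/eqP; apply: (i_U HI aw aw0); apply: onlyF.
    by rewrite aw0 hw0.
  by have := i_par HI z; rewrite /deg S1 cards1 ag0.
have noEmp x y : x \in visited c -> adj x y -> mk c x y != Emp.
  move=> xv axy; apply/eqP => E.
  case: (i_K HI xv (ex_intro2 _ _ y axy E)) => [lt|[y' ay' EF]].
    case: (eqVneq x (pos c true)) => [ex|xp]; last by rewrite ag0 in lt.
    by move: axy E; rewrite ex => axy; rewrite Dp.
  by have := noH x y' ay'; case/orP: EF => /eqP ->.
have clo x y : adj x y -> x \in visited c -> y \in visited c.
  move=> axy xv; have nE := noEmp x y xv axy.
  have ayx : adj y x by rewrite adj_sym.
  have nE' : mk c y x != Emp.
    by have := i_ok HI axy; move: nE; case: (mk c x y); case: (mk c y x).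
  exact (i_vis HI ayx nE').
have cl : closed adj (visited c).
  move=> x y axy; apply/idP/idP; first exact: clo.
  by apply: clo; rewrite adj_sym.
have allvis z : z \in visited c.
  by rewrite -(closed_connect cl (adj_conn (pos c true) z)) i_pos.
split => // x y axy.
have := noEmp x y (allvis x) axy; have := noH x y axy.
by case: (mk c x y).
Qed.

End Proof.

Theorem theorem4 (V : finType) (adj : rel V)
  (adj_sym : symmetric adj) (adj_irr : irreflexive adj)
  (adj_conn : forall x y : V, connect adj x y)
  (s0 : V) (s : seq (move V)) :
  valid_run adj (init_config s0) s ->
  size s <= 2 * #|edges adj| /\
  (stuck adj (final (init_config s0) s) ->
     [/\ size s = 2 * #|edges adj|,
         forall e, e \in edges adj -> traversals e s = 2
       & pos (final (init_config s0) s) true = pos (final (init_config s0) s) false]).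
Proof.
move=> Hv.
have HI0 : Inv adj (init_config s0) by apply: Inv_init.
have HF : Inv adj (final (init_config s0) s) by apply: Inv_run.
have tr e : e \in edges adj -> exists2 xy : V * V, adj xy.1 xy.2 & e = [set xy.1; xy.2].
  by case/imset2P => x y _; rewrite inE => /andP [_ axy] ->; exists (x, y).
have key e : e \in edges adj -> exists2 xy : V * V, adj xy.1 xy.2 &
   (e = [set xy.1; xy.2] /\ traversals e s + pe (final (init_config s0) s) xy.1 xy.2 = 2).
  move=> /tr [[x y] /= axy ->]; exists (x, y) => //; split => //.
  by rewrite (trav adj_sym adj_irr HI0 Hv axy).
have Hsz := size_sum Hv.
split.
  rewrite Hsz mulnC -sum_nat_const; apply: leq_sum => e /key [[x y] /= _ [_ E]].
  by rewrite -E leq_addr.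
move=> St; have [ep allD] := stuck_final adj_sym adj_conn HF St.
have t2 e : e \in edges adj -> traversals e s = 2.
  move=> /key [[x y] /= axy [_ E]]; move: E.
  by rewrite /pe !allD ?addn0 // adj_sym.
split => //.
by rewrite Hsz mulnC -sum_nat_const; apply: eq_bigr.
Qed.
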